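(* Let $k\in\mathbb N$, $E\subseteq W(A)$ and $\vec s\in V^\infty(A)$ such that $E$ is $k$-large in $\vec s$. Let $r\ge2$ and $E=\bigcup_{i=1}^r E_i$. Then there exist $1\le i\le r$ and $\vec t\in V^\infty(A)$ with $\vec t\le_k\vec s$ such that $E_i$ is $k$-large in $\vec t$.
   Context: $\mathbb N=\{0,1,2,\dots\}$. Fix an increasing sequence $A_0\subseteq A_1\subseteq A_2\subseteq\cdots$ of finite nonempty alphabets and set $A=\bigcup_{n\in\mathbb N}A_n$. $W(A)$ denotes the set of all finite words over $A$, including the empty word; words are concatenated by juxtaposition. Fix a symbol $x\notin A$. A variable word over $A$ is a finite word over $A\cup\{x\}$ in which $x$ occurs at least once; $V(A)$ is the set of variable words. For $s(x)\in V(A)$ and $a\in A\cup\{x\}$, $s(a)$ is obtained by replacing every occurrence of $x$ by $a$. $V^\infty(A)$ is the set of infinite sequences of variable words. For a sequence $(s_n(x))_{n\in I}$ of variable words and a sequence $(B_n)_{n\in I}$ of finite subsets of $A$, both indexed by a set $I\subseteq\mathbb N$ that is either a finite interval or of the form $\{m,m+1,\dots\}$: the constant span $\langle (s_n(x))_{n\in I}\,\|\,(B_n)_{n\in I}\rangle_c$ is the set of all words $s_{l_0}(a_0)s_{l_1}(a_1)\cdots s_{l_j}(a_j)$ with $j\ge0$, $l_0<\dots<l_j$ in $I$ and $a_i\in B_{l_i}$ for each $i$; the variable span $\langle (s_n(x))_{n\in I}\,\|\,(B_n)_{n\in I}\rangle_v$ is the set of all words $s_{l_0}(a_0)\cdots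 s_{l_j}(a_j)$ with $j\ge0$, $l_0<\dots<l_j$ in $I$, $a_i\in B_{l_i}\cup\{x\}$ for each $i$, and at least one $a_i=x$. (E.g. $(A_{k+n})_{n=p}^{q}$ denotes the sequence $B_n=A_{k+n}$, $p\le n\le q$.) Extracted $k$-subsequences: let $k\in\mathbb N$ and $\vec s=(s_n(x))_{n=0}^\infty\in V^\infty(A)$. A finite sequence $(t_n(x))_{n=0}^l$ of variable words is an extracted $k$-subsequence of $\vec s$ if there exist integers $0=m_0<m_1<\dots<m_{l+1}$ with $t_i(x)\in\langle (s_n(x))_{n=m_i}^{m_{i+1}-1}\,\|\,(A_{k+n})_{n=m_i}^{m_{i+1}-1}\rangle_v$ for all $0\le i\le l$. An infinite sequence $\vec t=(t_n(x))_{n=0}^\infty$ is an extracted $k$-subsequence of $\vec s$ if each initial segment $(t_n(x))_{n=0}^l$ is a finite extracted $k$-subsequence of $\vec s$. We write $\vec t\le_k\vec s$. A set $E\subseteq W(A)$ is $k$-large in $\vec s\in V^\infty(A)$ if $E\cap\langle\vec w\,\|\,(A_{k+n})_{n=0}^\infty\rangle_c\neq\emptyset$ for every $\vec w\in V^\infty(A)$ with $\vec w\le_k\vec s$. *)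

(* Defs.v *)
From mathcomp Require Import all_boot.
Set Implicit Arguments. Unset Strict Implicit. Unset Printing Implicit Defensive.

(* Letters have type T; the variable x is encoded as [None] in [option T].
   An alphabet sequence is [A : nat -> seq T] (finite sets as lists). *)

Section Words.
Variable T : eqType.

Definition in_alph (A : nat -> seq T) (a : T) : Prop := exists n, a \in A n.

Definition is_word (A : nat -> seq T) (w : seq T) : Prop :=
  forall a, a \in w -> in_alph A a.

Definition is_vword (A : nat -> seq T) (s : seq (option T)) : Prop :=
  None \in s /\ forall a, Some a \in s -> in_alph A a.

Definition is_Vinf (A : nat -> seq T) (s : nat -> seq (option T)) : Prop :=
  forall n, is_vword A (s n).

Definition csubst (s : seq (option T)) (a : T) : seq T :=
  map (fun o => if o is Some b then b else a) s.

Definition vsubst (s : seq (option T)) (a : option T) : seq (option T) :=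
  map (fun o => if o is Some b then Some b else a) s.

(* constant span <(s_n)_{n in I} || (B_n)_{n in I}>_c :
   words s_{l0}(a0)...s_{lj}(aj), j >= 0, l0 < ... < lj in I, ai in B_{li} *)
Definition cspan (s : nat -> seq (option T)) (B : nat -> seq T) (I : pred nat)
    (w : seq T) : Prop :=
  exists ls : seq (nat * T),
    [/\ ls != [::], sorted ltn (map fst ls),
        all (fun p => I p.1) ls, all (fun p => p.2 \in B p.1) ls &
        w = flatten (map (fun p => csubst (s p.1) p.2) ls)].

Definition vspan (s : nat -> seq (option T)) (B : nat -> seq T) (I : pred nat)
    (w : seq (option T)) : Prop :=
  exists ls : seq (nat * option T),
    [/\ ls != [::], sorted ltn (map fst ls),
        all (fun p => I p.1) ls,
        all (fun p => if p.2 is Some a then a \in B p.1 else true) ls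
          && (None \in map snd ls) &
        w = flatten (map (fun p => vsubst (s p.1) p.2) ls)].

Definition extracted_fin (A : nat -> seq T) (k : nat)
    (s t : nat -> seq (option T)) (l : nat) : Prop :=
  exists m : nat -> nat,
    [/\ m 0 = 0,
        forall i, i <= l -> m i < m i.+1 &
        forall i, i <= l ->
          vspan s (fun n => A (k + n)) (fun n => m i <= n < m i.+1) (t i)].

Definition le_k (A : nat -> seq T) (k : nat) (t s : nat -> seq (option T)) : Prop :=
  forall l, extracted_fin A k s t l.

Definition k_large (A : nat -> seq T) (k : nat) (E : seq T -> Prop)
    (s : nat -> seq (option T)) : Prop :=
  forall w, is_Vinf A w -> le_k A k w s ->
    exists u, E u /\ cspan w (fun n => A (k + n)) (fun _ => true) u.

End Words.

(* Main.v *)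
Require Import Defs.
From mathcomp Require Import all_boot.
From Stdlib Require Import Classical.
Set Implicit Arguments. Unset Strict Implicit. Unset Printing Implicit Defensive.

Section S.
Variable T : eqType.
Implicit Types (A : nat -> seq T).

Lemma vsubst_flatten (X : seq (seq (option T))) a :
  vsubst (flatten X) a = flatten (map (fun u => vsubst u a) X).
Proof. by rewrite /vsubst map_flatten. Qed.

Lemma vsubst_comp (s : seq (option T)) b a :
  vsubst (vsubst s b) a = vsubst s (if b is Some c then Some c else a).
Proof. by rewrite /vsubst -map_comp; apply: eq_map => -[c|] //=; case: b. Qed.

Lemma vsubst_Some (s : seq (option T)) a : vsubst s (Some a) = map Some (csubst s a).
Proof. by rewrite /vsubst /csubst -map_comp; apply: eq_map => -[c|]. Qed.

Lemma vsubst_None (s : seq (option T)) : vsubst s None = s.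
Proof. by rewrite /vsubst -[RHS]map_id; apply: eq_map => -[c|]. Qed.

Lemma alph_mono A (hA_inc : forall n, {subset A n <= A n.+1}) a n n' :
  n <= n' -> a \in A n -> a \in A n'.
Proof.
move=> /subnK <-; elim: (n' - n) => [//|d IH] Ha.
by rewrite addSn; apply: hA_inc; apply: IH.
Qed.

Definition valid A k (ls : seq (nat * option T)) :=
  all (fun p => if p.2 is Some a then a \in A (k + p.1) else true) ls.

Section Compose.
Variables (A : nat -> seq T) (k : nat) (s t : nat -> seq (option T)) (m : nat -> nat) (L : nat).
Hypothesis hA_inc : forall n, {subset A n <= A n.+1}.
Hypothesis hmono : forall i j, i <= j -> j <= L.+1 -> m i <= m j.
Hypothesis hmge : forall i, i <= L -> i <= m i.
Hypothesis hsp : forall i, i <= L ->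
  vspan s (fun n => A (k + n)) (fun n => m i <= n < m i.+1) (t i).

Lemma compose (ls : seq (nat * option T)) :
  sorted ltn (map fst ls) -> all (fun p => p.1 <= L) ls -> valid A k ls ->
  exists ls' : seq (nat * option T), [/\ sorted ltn (map fst ls'), valid A k ls',
    (None \in map snd ls') = (None \in map snd ls) /\ (ls != [::] -> ls' != [::]),
    forall q, q \in ls' -> exists2 p, p \in ls & m p.1 <= q.1 < m p.1.+1 &
    flatten (map (fun p => vsubst (s p.1) p.2) ls') =
      flatten (map (fun p => vsubst (t p.1) p.2) ls)].
Proof.
elim: ls => [|[l a] ls IH].
  by move=> _ _ _; exists [::]; split => //; split.
rewrite /= (path_sortedE ltn_trans) => /andP[Hlt Hsort] /andP[HlL HL] /andP[Ha Hval].
have [ls0 [S0 V0 [N0 _] I0 E0]] := IH Hsort HL Hval.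
case: (hsp HlL) => js [js_ne js_sort js_I /andP[js_val js_None] js_eq].
pose blk := map (fun p : nat * option T => (p.1, if p.2 is Some c then Some c else a)) js.
have Hblk : forall q, q \in blk -> m l <= q.1 < m l.+1.
  move=> q /mapP[p pin ->] /=; exact: (allP js_I p pin).
exists (blk ++ ls0); split.
- rewrite map_cat (sorted_pairwise ltn_trans) pairwise_cat.
  rewrite -!(sorted_pairwise ltn_trans) S0 andbT.
  have -> : map fst blk = map fst js by rewrite /blk -map_comp.
  rewrite js_sort andbT; apply/allrelP => x y /mapP[q qb ->] /mapP[q' q'b ->].
  have [p pin /andP[Hp1 Hp2]] := I0 q' q'b.
  have /andP[_ Hq] := allP js_I q qb.
  have Hpl : l < p.1 by move/allP: Hlt; apply; apply: map_f.
  have HpL : p.1 <= L by move/allP: HL; apply.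
  exact: leq_trans Hq (leq_trans (hmono Hpl (leqW HpL)) Hp1).
- rewrite /blk; clear Hblk blk; rewrite /valid all_cat; move: V0; rewrite /valid => ->; rewrite andbT; apply/allP => q /mapP[p pin ->] /=.
  case Hp2: p.2 => [c|].
    by have := allP js_val p pin; rewrite Hp2.
  case: a Ha => [c|] //= Hc.
  have /andP[Hp _] := allP js_I p pin.
  apply: (alph_mono hA_inc _ Hc); rewrite leq_add2l.
  exact: leq_trans (hmge HlL) Hp.
- split; last by move=> _; rewrite /blk; case: (js) js_ne.
  rewrite /blk; clear Hblk blk; rewrite map_cat mem_cat N0 /= in_cons; congr (_ || _).
  case: a {Ha} => [c|] /=.
    apply/negbTE/mapP => -[q /mapP[p _ ->]] /=; by case: p.2.
  case/mapP: js_None => p pin Hp; apply/mapP; exists (p.1, None) => //.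
  by apply/mapP; exists p => //; rewrite -Hp.
- move=> q; rewrite mem_cat => /orP[qb|q0].
    by exists (l, a); [rewrite inE eqxx | exact: Hblk].
  by have [p pin Hp] := I0 q q0; exists p => //; rewrite inE pin orbT.
- rewrite map_cat flatten_cat E0 /= js_eq vsubst_flatten -map_comp; congr (_ ++ _).
  rewrite /blk -map_comp; congr flatten; apply: eq_map => p /=.
  by rewrite vsubst_comp.
Qed.
End Compose.

Lemma mono_of (m : nat -> nat) l : m 0 = 0 -> (forall i, i <= l -> m i < m i.+1) ->
  (forall i j, i <= j -> j <= l.+1 -> m i <= m j) /\ (forall i, i <= l.+1 -> i <= m i).
Proof.
move=> m0 mlt; split.
  move=> i j; elim: j => [|j IH]; first by rewrite leqn0 => /eqP ->.
  rewrite leq_eqVlt => /orP[/eqP -> //|Hij] Hj.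
  exact: leq_trans (IH Hij (ltnW Hj)) (ltnW (mlt j Hj)).
elim=> [//|i IH] Hi; exact: leq_ltn_trans (IH (ltnW Hi)) (mlt i Hi).
Qed.

Lemma le_k_trans A k (t w s : nat -> seq (option T)) :
  (forall n, {subset A n <= A n.+1}) ->
  le_k A k t w -> le_k A k w s -> le_k A k t s.
Proof.
move=> hA_inc Htw Hws l.
case: (Htw l) => m2 [m20 m2lt m2sp].
pose L := m2 l.+1.
case: (Hws L) => m1 [m10 m1lt m1sp].
have [m2mono m2ge] := mono_of m20 m2lt.
have [m1mono m1ge] := mono_of m10 m1lt.
have m1slt : forall i j, i < j -> j <= L.+1 -> m1 i < m1 j.
  move=> i j Hij HjL; apply: leq_trans (m1lt i _) (m1mono _ _ Hij HjL).
  by rewrite -ltnS; exact: leq_trans Hij HjL.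
exists (fun i => m1 (m2 i)); split.
- by rewrite m20 m10.
- move=> i Hi; apply: m1slt; first exact: m2lt.
  by apply: leqW; apply: m2mono => //.
- move=> i Hi.
  case: (m2sp i Hi) => ls [ne sort I /andP[val None] eq].
  have HL : all (fun p : nat * option T => p.1 <= L) ls.
    apply/allP => p pin; have /andP[_ Hp] := allP I p pin.
    apply: ltnW; apply: leq_trans Hp _; exact: m2mono.
  have [ls' [S' V' [N' NE'] I' E']] :=
    compose hA_inc (fun i j Hij Hj => m1mono i j Hij Hj)
      (fun i Hi => m1ge i (leqW Hi)) (fun i Hi => m1sp i Hi) sort HL val.
  exists ls'; split => //.
  + by case: (ls') N'; rewrite None.
  + apply/allP => q qin; have [p pin /andP[Hq1 Hq2]] := I' q qin.
    have /andP[Hp1 Hp2] := allP I p pin.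
    have HpL : p.1 < L by apply: leq_trans Hp2 _; exact: m2mono.
    apply/andP; split.
      exact: leq_trans (m1mono _ _ Hp1 (leqW (ltnW HpL))) Hq1.
    apply: leq_trans Hq2 _; apply: m1mono Hp2 _.
    by apply: leqW; exact: m2mono.
  + by rewrite N' None andbT.
  + by rewrite E' eq.
Qed.

Lemma mem_sumn x (l : seq nat) : x \in l -> x <= sumn l.
Proof.
elim: l => [//|y l IH]; rewrite inE => /orP[/eqP ->|H] /=; first exact: leq_addr.
exact: leq_trans (IH H) (leq_addl _ _).
Qed.

Lemma cspan_mono A k (t w : nat -> seq (option T)) :
  (forall n, {subset A n <= A n.+1}) -> le_k A k t w ->
  forall u, cspan t (fun n => A (k + n)) (fun _ => true) u ->
            cspan w (fun n => A (k + n)) (fun _ => true) u.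
Proof.
move=> hA_inc H u [ls [ne sort _ val equ]].
have [[l0 a0] _] : exists p, p \in ls.
  by case: (ls) ne => // p ls1 _; exists p; rewrite inE eqxx.
pose L := sumn (map fst ls).
case: (H L) => m [m0 mlt msp].
have [mmono mge] := mono_of m0 mlt.
pose ls2 := map (fun p : nat * T => (p.1, Some p.2)) ls.
have S2 : sorted ltn (map fst ls2) by rewrite /ls2 -map_comp.
have L2 : all (fun p : nat * option T => p.1 <= L) ls2.
  apply/allP => q /mapP[p pin ->] /=; apply: mem_sumn; exact: map_f.
have V2 : valid A k ls2.
  apply/allP => q /mapP[p pin ->] /=; exact: (allP val p pin).
have [ls' [S' V' [N' NE'] I' E']] :=
  compose hA_inc (fun i j Hij Hj => mmono i j Hij Hj)
    (fun i Hi => mge i (leqW Hi)) (fun i Hi => msp i Hi) S2 L2 V2.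
have N2 : None \notin map snd ls2.
  by apply/mapP => -[q /mapP[p _ ->]].
rewrite -N' in N2.
have HS : forall q, q \in ls' -> q.2 = Some (odflt a0 q.2).
  move=> q qin; case Hq: q.2 => [c|] //.
  by move: N2; rewrite -Hq map_f.
exists (map (fun q : nat * option T => (q.1, odflt a0 q.2)) ls'); split.
- have ne2 : ls2 != [::] by rewrite /ls2; case: (ls) ne.
  by move: (NE' ne2); case: (ls').
- by rewrite -map_comp.
- by apply/allP.
- apply/allP => q /mapP[p pin ->] /=.
  by have := allP V' p pin; rewrite (HS p pin).
- apply/(inj_map Some_inj).
  rewrite equ !map_flatten -!map_comp.
  transitivity (flatten (map (fun p => vsubst (t p.1) p.2) ls2)).
    by rewrite /ls2 -map_comp; congr flatten; apply: eq_map => p /=; rewrite vsubst_Some.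
  rewrite -E'; congr flatten; apply/(@eq_in_map _ _ _ _ ls') => q qin /=.
  idtac.
  by rewrite {1}(HS q qin) vsubst_Some.
Qed.
Lemma le_k_refl A k (s : nat -> seq (option T)) : le_k A k s s.
Proof.
move=> l; exists id; split => // i _.
exists [:: (i, None)]; split => //=; first by rewrite leqnn ltnS leqnn.
by rewrite cats0 vsubst_None.
Qed.
End S.

Theorem fact3p5 (T : eqType) (A : nat -> seq T)
    (hA_ne : forall n, A n != [::])
    (hA_inc : forall n, {subset A n <= A n.+1})
    (k : nat) (E : seq T -> Prop) (s : nat -> seq (option T))
    (hEW : forall w, E w -> is_word A w)
    (hs : is_Vinf A s)
    (hlarge : k_large A k E s)
    (r : nat) (hr : 2 <= r) (Es : nat -> seq T -> Prop)
    (hunion : forall w, E w <-> exists2 i, 1 <= i <= r & Es i w) :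
  exists2 i, 1 <= i <= r &
    exists t, [/\ is_Vinf A t, le_k A k t s & k_large A k (Es i) t].
Proof.
apply: NNPP => Hno.
have H : forall i, 1 <= i <= r -> forall t, is_Vinf A t -> le_k A k t s ->
    ~ k_large A k (Es i) t.
  by move=> i Hi t Ht Hts Hl; apply: Hno; exists i => //; exists t; split.
have claim : forall j, j <= r -> exists w, [/\ is_Vinf A w, le_k A k w s &
    forall u, cspan w (fun n => A (k + n)) (fun _ => true) u ->
      forall i, 1 <= i <= j -> ~ Es i u].
  elim => [_|j IH Hj].
    exists s; split => //; first exact: le_k_refl.
    by move=> u _ i /andP[Hi1 Hi2]; move: (leq_trans Hi1 Hi2).
  have [w [Hw Hws Hu]] := IH (ltnW Hj).
  have Hnl := H j.+1 Hj w Hw Hws.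
  have [w' [Hw' Hw'w Hno']] : exists w', [/\ is_Vinf A w', le_k A k w' w &
      forall u, Es j.+1 u -> ~ cspan w' (fun n => A (k + n)) (fun _ => true) u].
    apply: NNPP => Hc; apply: Hnl => w' Hw' Hw'w; apply: NNPP => Hc2.
    apply: Hc; exists w'; split => // u HEu Hcs; by apply: Hc2; exists u.
  exists w'; split => //; first exact: le_k_trans hA_inc Hw'w Hws.
  move=> u Hcs i /andP[Hi1 Hi2]; move: Hi2; rewrite leq_eqVlt ltnS => /orP[/eqP ->|Hij].
    by move=> HE; exact: Hno' u HE Hcs.
  apply: (Hu u (cspan_mono hA_inc Hw'w Hcs) i); by rewrite Hi1 Hij.
have [w [Hw Hws Hu]] := claim r (leqnn r).
have [u [Eu Hcs]] := hlarge w Hw Hws.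
case/hunion: Eu => i Hi Ei.
exact: Hu u Hcs i Hi Ei.
Qed.
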